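(* In the setting below, under the persistent excitation assumption and the inexact disturbance bound assumption, the fixed-complexity parameter set $\Theta_t$ with periodic update converges with probability 1 to a subset of $\{\theta\in\mathbb{R}^p: M_\Theta(\theta-\theta^\ast)\le(\rho N_u\tau/\beta)\mathbf{1}\}$; that is, with probability 1, $\bigcap_{t\ge0}\Theta_t\subseteq\{\theta: M_\Theta(\theta-\theta^\ast)\le(\rho N_u\tau/\beta)\mathbf{1}\}$.
   Context: Setting: $\theta^\ast\in\mathbb{R}^p$ is a fixed (unknown) parameter vector. $\mathcal{W}=\{w\in\mathbb{R}^{n_x}:\Pi_w w\le\pi_w\}$ is a compact convex polytope with $\pi_w>0$. The disturbances $w_0,w_1,\dots$ are independent random vectors in $\mathbb{R}^{n_x}$. $D_0,D_1,\dots\in\mathbb{R}^{n_x\times p}$ is a given (non-random) sequence of regressor matrices. For $t\ge1$ the (random) unfalsified parameter set is $\Delta_t=\{\theta\in\mathbb{R}^p: D_{t-1}(\theta^\ast-\theta)+w_{t-1}\in\mathcal{W}\}$. $\|\cdot\|$ is the Euclidean norm (induced 2-norm for matrices); $\mathcal{B}=\{x\in\mathbb{R}^{n_x}:\|x\|\le1\}$; $\oplus$ is Minkowski sum; $\mathbf{1}$ is the vector of ones; vector inequalities are componentwise. Persistent excitation assumption: there exist $\tau>0$, $\beta>0$ and an integer $N_u\ge\lceil p/n_x\rceil$ such that for every $t\ge0$, $\|D_t\|\le\tau$ and $\sum_{j=t}^{t+N_u-1}D_j^\top D_j\succeq\beta I$. Inexact disturbance bound assumption: there exist a compact set $\Omega\subset\mathbb{R}^{n_x}$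 and $\rho>0$ with $\Omega\subseteq\mathcal{W}\subseteq\Omega\oplus\rho\mathcal{B}$, such that $w_t\in\Omega$ for all $t$, and a function $p_w:(0,\infty)\to(0,1]$ such that for all $w^0\in\partial\Omega$ (boundary of $\Omega$), all $\epsilon>0$ and all $t\ge0$, $\Pr\{\|w_t-w^0\|<\epsilon\}\ge p_w(\epsilon)$. Fixed-complexity parameter set with periodic update: $M_\Theta\in\mathbb{R}^{r\times p}$ has rows of unit Euclidean norm and is such that $\Theta(\mu):=\{\theta:M_\Theta\theta\le\mu\}$ is bounded for every $\mu\in\mathbb{R}^r$; $\Theta_0=\Theta(\mu_0)$ contains $\theta^\ast$. For $t\ge1$: if $t=kN_u$ for some integer $k\ge1$, then $\Theta_t=\Theta(\mu_t)$ with $[\mu_t]_i=\max\{[M_\Theta]_i\theta:\theta\in\Theta_{t-N_u}\cap\bigcap_{j=t-N_u+1}^t\Delta_j\}$ for $i=1,\dots,r$; otherwise $\Theta_t=\Theta_{t-1}$. *)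

(* Defs.v *)
From HB Require Import structures.
From mathcomp Require Import all_boot all_order all_algebra.
From mathcomp Require Import all_classical all_reals all_analysis.
Set Implicit Arguments. Unset Strict Implicit. Unset Printing Implicit Defensive.
Import Order.TTheory GRing.Theory Num.Theory.
Import numFieldNormedType.Exports.
Local Open Scope classical_set_scope.
Local Open Scope ring_scope.

Section Defs.
Variable R : realType.

Definition norm2 {n : nat} (v : 'cV[R]_n) : R := Num.sqrt (\sum_i v i 0 ^+ 2).

Definition mxnorm2 {m n : nat} (A : 'M[R]_(m, n)) : R :=
  sup [set norm2 (A *m x) | x in [set x : 'cV[R]_n | norm2 x <= 1]].

Definition mxle {m n : nat} (A B : 'M[R]_(m, n)) : Prop :=
  forall i j, A i j <= B i j.

Definition loewner_le {n : nat} (A B : 'M[R]_n) : Prop :=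
  forall x : 'cV[R]_n, (x^T *m A *m x) 0 0 <= (x^T *m B *m x) 0 0.

Definition minkowski_ball {n : nat} (Om : set 'cV[R]_n) (rho : R) : set 'cV[R]_n :=
  [set v | exists o b, Om o /\ norm2 b <= 1 /\ v = o + rho *: b].

Definition boundary {n : nat} (Om : set 'cV[R]_n) : set 'cV[R]_n :=
  closure Om `\` interior Om.

Definition polyset {r p : nat} (M : 'M[R]_(r, p)) (mu : 'cV[R]_r) : set 'cV[R]_p :=
  [set th | mxle (M *m th) mu].

Definition bounded_set2 {n : nat} (S : set 'cV[R]_n) : Prop :=
  exists K : R, forall x, S x -> norm2 x <= K.

End Defs.

Section Prob.
Context {d : measure_display} {T : measurableType d} {R : realType}.

(* generators of the sigma-algebra sigma(X) of a random vector X (Borel on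
   R^n = product of the Borel sigma-algebras of the coordinates) *)
Definition rvec_gen {n : nat} (X : T -> 'cV[R]_n) : set (set T) :=
  [set A | exists (i : 'I_n) (B : set R), measurable B /\
           A = (fun x => X x i 0) @^-1` B].

Definition rvec_sigma {n : nat} (X : T -> 'cV[R]_n) : set (set T) :=
  <<s rvec_gen X >>.

Definition indep_seq (P : probability T R) {n : nat} (w : nat -> T -> 'cV[R]_n) : Prop :=
  forall (F : seq nat) (A : nat -> set T), uniq F ->
    (forall t, t \in F -> rvec_sigma (w t) (A t)) ->
    P (\big[setI/setT]_(t <- F) A t) = (\prod_(t <- F) P (A t))%E.

End Prob.

Section Sets.
Variable R : realType.
Variables (nx p r q : nat).

(* unfalsified set Delta_t (for t >= 1), for a fixed outcome omega *)
Definition Delta (Pi_w : 'M[R]_(q, nx)) (pi_w : 'cV[R]_q)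
  (D : nat -> 'M[R]_(nx, p)) (ths : 'cV[R]_p) (wt : nat -> 'cV[R]_nx) (t : nat)
  : set 'cV[R]_p :=
  [set th | mxle (Pi_w *m (D t.-1 *m (ths - th) + wt t.-1)) pi_w].

(* mu_{k N_u}, for k = 0, 1, 2, ...  *)
Fixpoint mu_upd (M : 'M[R]_(r, p)) (mu0 : 'cV[R]_r) (Nu : nat)
  (Dlt : nat -> set 'cV[R]_p) (k : nat) : 'cV[R]_r :=
  match k with
  | 0 => mu0
  | k'.+1 =>
      \col_i sup [set (M *m th) i 0 | th in
           polyset M (mu_upd M mu0 Nu Dlt k') `&`
           [set th | forall j, (k' * Nu < j <= k'.+1 * Nu)%N -> Dlt j th]]
  end.

Definition Theta_seq (M : 'M[R]_(r, p)) (mu0 : 'cV[R]_r) (Nu : nat)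
  (Dlt : nat -> set 'cV[R]_p) (t : nat) : set 'cV[R]_p :=
  polyset M (mu_upd M mu0 Nu Dlt (t %/ Nu)).

End Sets.

(* Main.v *)
Require Import Defs.
From HB Require Import structures.
From mathcomp Require Import all_boot all_order all_algebra.
From mathcomp Require Import all_classical all_reals all_analysis.
From mathcomp Require Import ring lra.
From mathcomp Require Import measurable_realfun measurable_fun_approximation.
Import Order.TTheory GRing.Theory Num.Theory.
Import numFieldNormedType.Exports.
Local Open Scope classical_set_scope.
Local Open Scope ring_scope.
From mathcomp Require Import zify.


Section Dot.
Context {R : realType}.

Definition dot {n} (u v : 'cV[R]_n) : R := \sum_l u l 0 * v l 0.

Lemma dotC {n} (u v : 'cV[R]_n) : dot u v = dot v u.
Proof. by apply: eq_bigr => l _; rewrite mulrC. Qed.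

Lemma dotDr {n} (u v v' : 'cV[R]_n) : dot u (v + v') = dot u v + dot u v'.
Proof. by rewrite /dot -big_split; apply: eq_bigr => l _; rewrite mxE mulrDr. Qed.

Lemma dotNr {n} (u v : 'cV[R]_n) : dot u (- v) = - dot u v.
Proof. by rewrite /dot -sumrN; apply: eq_bigr => l _; rewrite mxE mulrN. Qed.

Lemma dotBr {n} (u v v' : 'cV[R]_n) : dot u (v - v') = dot u v - dot u v'.
Proof. by rewrite dotDr dotNr. Qed.

Lemma dotZr {n} a (u v : 'cV[R]_n) : dot u (a *: v) = a * dot u v.
Proof. by rewrite /dot mulr_sumr; apply: eq_bigr => l _; rewrite mxE mulrCA. Qed.

Lemma dotDl {n} (u u' v : 'cV[R]_n) : dot (u + u') v = dot u v + dot u' v.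
Proof. by rewrite dotC dotDr !(dotC v). Qed.
Lemma dotNl {n} (u v : 'cV[R]_n) : dot (- u) v = - dot u v.
Proof. by rewrite dotC dotNr dotC. Qed.
Lemma dotBl {n} (u u' v : 'cV[R]_n) : dot (u - u') v = dot u v - dot u' v.
Proof. by rewrite dotDl dotNl. Qed.
Lemma dotZl {n} a (u v : 'cV[R]_n) : dot (a *: u) v = a * dot u v.
Proof. by rewrite dotC dotZr dotC. Qed.
Lemma dot0r {n} (u : 'cV[R]_n) : dot u 0 = 0.
Proof. by rewrite /dot big1 // => l _; rewrite mxE mulr0. Qed.
Lemma dot0l {n} (u : 'cV[R]_n) : dot 0 u = 0.
Proof. by rewrite dotC dot0r. Qed.

Lemma dot_sumr {n} (I : Type) (s : seq I) (F : I -> 'cV[R]_n) u :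
  dot u (\sum_(i <- s) F i) = \sum_(i <- s) dot u (F i).
Proof.
elim: s => [|a s IH]; first by rewrite !big_nil dot0r.
by rewrite !big_cons dotDr IH.
Qed.

Lemma dot_mulmx {m n} (A : 'M[R]_(m, n)) u v :
  dot u (A *m v) = dot (A^T *m u) v.
Proof.
rewrite /dot.
under eq_bigr => i _ do rewrite mxE mulr_sumr.
rewrite exchange_big /=; apply: eq_bigr => j _.
rewrite mxE mulr_suml; apply: eq_bigr => i _; rewrite mxE; ring.
Qed.

Lemma mulmx_entry_dot {r p} (M : 'M[R]_(r, p)) th i :
  (M *m th) i 0 = dot (row i M)^T th.
Proof. by rewrite mxE /dot; apply: eq_bigr => l _; rewrite !mxE. Qed.

Lemma quad_dot {n} (A : 'M[R]_n) x : (x^T *m A *m x) 0 0 = dot x (A *m x).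
Proof.
rewrite -mulmxA mxE /dot; apply: eq_bigr => l _; rewrite !mxE.
by [].
Qed.

Lemma dot_ge0 {n} (v : 'cV[R]_n) : 0 <= dot v v.
Proof. by apply: sumr_ge0 => l _; rewrite -expr2 sqr_ge0. Qed.

Lemma dot_eq0 {n} {v : 'cV[R]_n} : dot v v = 0 -> v = 0.
Proof.
move=> /eqP; rewrite psumr_eq0; last by move=> l _; rewrite -expr2 sqr_ge0.
move=> /allP H; apply/matrixP => i j; rewrite (ord1 j) mxE.
have := H i (mem_index_enum _); rewrite mulf_eq0 orbb => /eqP //.
Qed.

Lemma norm2E {n} (v : 'cV[R]_n) : norm2 v = Num.sqrt (dot v v).
Proof. by rewrite /norm2 /dot; congr Num.sqrt; apply: eq_bigr => l _; rewrite expr2. Qed.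

Lemma norm2_ge0 {n} (v : 'cV[R]_n) : 0 <= norm2 v.
Proof. by rewrite norm2E sqrtr_ge0. Qed.

Lemma norm2_sqr {n} (v : 'cV[R]_n) : norm2 v ^+ 2 = dot v v.
Proof. by rewrite norm2E sqr_sqrtr // dot_ge0. Qed.

Lemma CS2 {n} (u v : 'cV[R]_n) : dot u v ^+ 2 <= dot u u * dot v v.
Proof.
have [v0|vn0] := eqVneq (dot v v) 0.
  by rewrite (dot_eq0 v0) dot0r expr0n /= dot0r mulr0.
have vp : 0 < dot v v by rewrite lt_def vn0 dot_ge0.
set t := dot u v / dot v v.
have := dot_ge0 (u - t *: v).
rewrite dotBl !dotBr !dotZl !dotZr (dotC v u) => H.
have E : dot u u - t * dot u v - (t * dot u v - t * (t * dot v v)) =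
   dot u u - dot u v ^+ 2 / dot v v.
  by rewrite /t; field; rewrite vn0.
by rewrite E subr_ge0 ler_pdivrMr // in H.
Qed.

Lemma CS {n} (u v : 'cV[R]_n) : dot u v <= norm2 u * norm2 v.
Proof.
have [le0|gt0] := lerP (dot u v) 0.
  by apply: le_trans le0 _; rewrite mulr_ge0 // norm2_ge0.
rewrite !norm2E -sqrtrM ?dot_ge0 //.
rewrite -(ger0_norm (ltW gt0)) -sqrtr_sqr ler_sqrt ?CS2 //.
by rewrite mulr_ge0 // dot_ge0.
Qed.

Lemma coord_le_norm2 {n} (v : 'cV[R]_n) i : `|v i 0| <= norm2 v.
Proof.
rewrite /norm2 -sqrtr_sqr ler_sqrt; last by apply: sumr_ge0 => l _; exact: sqr_ge0.
rewrite (bigD1 i) //= lerDl; apply: sumr_ge0 => l _; exact: sqr_ge0.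
Qed.

Lemma norm2Z {n} a (v : 'cV[R]_n) : norm2 (a *: v) = `|a| * norm2 v.
Proof.
rewrite !norm2E dotZl dotZr mulrA -expr2 sqrtrM ?sqr_ge0 //.
by rewrite sqrtr_sqr.
Qed.

Lemma norm2_eq0 {n} {v : 'cV[R]_n} : norm2 v = 0 -> v = 0.
Proof.
rewrite norm2E => /eqP; rewrite sqrtr_eq0 => H; apply: dot_eq0.
by apply/eqP; rewrite eq_le H dot_ge0.
Qed.

Lemma norm2_0 {n} : norm2 (0 : 'cV[R]_n) = 0.
Proof. by rewrite norm2E dot0r sqrtr0. Qed.

End Dot.


Section LA.
Context {R : realType}.

Lemma dot_le1 {n} (x : 'cV[R]_n) : norm2 x <= 1 -> dot x x <= 1.
Proof.
move=> h; rewrite -norm2_sqr -(expr1n R 2).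
by rewrite lerXn2r ?nnegrE ?norm2_ge0.
Qed.

Lemma mxnorm2_ub {m n} (A : 'M[R]_(m, n)) :
  has_ubound [set norm2 (A *m x) | x in [set x : 'cV[R]_n | norm2 x <= 1]].
Proof.
exists (Num.sqrt (\sum_a dot (row a A)^T (row a A)^T)).
move=> _ [x /= hx <-]; rewrite norm2E ler_sqrt; last first.
  by apply: sumr_ge0 => a _; exact: dot_ge0.
rewrite {1}/dot (eq_bigr (fun a => dot (row a A)^T x * dot (row a A)^T x)); last first.
  by move=> a _; rewrite -mulmx_entry_dot.
apply: ler_sum => a _; rewrite -expr2; apply: le_trans (CS2 _ _) _.
rewrite -[X in _ <= X]mulr1 ler_wpM2l ?dot_ge0 //.
by rewrite dot_le1.
Qed.

Lemma mx_bound {m n} (A : 'M[R]_(m, n)) x :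
  norm2 (A *m x) <= mxnorm2 A * norm2 x.
Proof.
have ub := ub_le_sup (mxnorm2_ub A).
have [x0|xn0] := eqVneq x 0.
  by rewrite x0 mulmx0 !norm2_0 mulr0.
have sp : 0 < norm2 x.
  rewrite lt_def norm2_ge0 andbT; apply/eqP => /norm2_eq0 /eqP.
  by rewrite (negbTE xn0).
have h1 : norm2 ((norm2 x)^-1 *: x) <= 1.
  by rewrite norm2Z ger0_norm ?invr_ge0 ?norm2_ge0 // mulVf ?gt_eqF.
have H : norm2 (A *m ((norm2 x)^-1 *: x)) <= mxnorm2 A.
  by apply: ub; exists ((norm2 x)^-1 *: x).
rewrite -scalemxAr norm2Z ger0_norm ?invr_ge0 ?norm2_ge0 // in H.
by rewrite mulrC -ler_pdivrMl // mulrC.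
Qed.

Lemma loewner_dot {n} (G : 'M[R]_n) (beta : R) x :
  loewner_le (beta%:M) G -> beta * dot x x <= dot x (G *m x).
Proof.
move=> /(_ x); rewrite !quad_dot mul_scalar_mx dotZr //.
Qed.

Lemma loewner_unit {n} (G : 'M[R]_n) (beta : R) :
  0 < beta -> loewner_le (beta%:M) G -> G \in unitmx.
Proof.
move=> bp hL; rewrite -unitmx_tr -row_free_unit -kermx_eq0.
apply/negPn/negP => /negP hK.
have [[i hi]|H] := pselect (exists i, row i (kermx G^T) != 0); last first.
  apply: hK; apply/eqP/row_matrixP => i; rewrite row0.
  by apply/eqP/negPn/negP => hn; apply: H; exists i.
set u := row i (kermx G^T).
have hu : G *m u^T = 0.
  by rewrite -[G]trmxK -trmx_mul /u -row_mul mulmx_ker row0 trmx0.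
have := loewner_dot G beta u^T hL; rewrite hu dot0r => h.
have : dot u^T u^T = 0.
  apply/eqP; rewrite eq_le dot_ge0 andbT.
  by rewrite -(pmulr_rle0 _ bp).
move=> /dot_eq0 /(f_equal trmx); rewrite trmxK trmx0 => u0.
by move: hi; rewrite -/u u0 eqxx.
Qed.

Lemma loewner_inv_bound {n} (G : 'M[R]_n) (beta : R) v :
  0 < beta -> loewner_le (beta%:M) G ->
  norm2 (invmx G *m v) <= norm2 v / beta.
Proof.
move=> bp hL; have hU := loewner_unit G beta bp hL.
set y := invmx G *m v.
have Gy : G *m y = v by rewrite /y mulKVmx.
have := loewner_dot G beta y hL; rewrite Gy => h.
have h2 := le_trans h (CS y v).
rewrite -norm2_sqr expr2 mulrA in h2.
have [y0|yp] := eqVneq (norm2 y) 0.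
  by rewrite y0 divr_ge0 ?norm2_ge0 // ltW.
have yp' : 0 < norm2 y by rewrite lt_def yp norm2_ge0.
rewrite ler_pdivlMr // mulrC.
by rewrite [X in _ <= X]mulrC ler_pM2r // in h2.
Qed.

End LA.


Section Geo.
Context {R : realType}.

Lemma dot_continuous {n} (g : 'cV[R]_n) : continuous (fun v : 'cV[R]_n => dot g v).
Proof.
move=> x; rewrite /dot.
have H := (@cvg_big R 'I_n +%R 0 xpredT add_continuous _ (nbhs x) (index_enum _) (fun l v => g l 0 * v l 0)
  (fun l => g l 0 * x l 0)).
apply: H => l _; apply: cvgM; first exact: cvg_cst.
exact: coord_continuous.
Qed.

Lemma bd_min {n} (Om : set 'cV[R]_n) (g : 'cV[R]_n) :
  compact Om -> Om !=set0 -> g != 0 ->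
  exists w0, boundary Om w0 /\ forall o, Om o -> dot g w0 <= dot g o.
Proof.
move=> cOm nOm gn0.
have [c cin cmin] := compact_EVT_min nOm cOm
   (continuous_subspaceT (dot_continuous g)).
rewrite inE in cin.
exists c; split; last by move=> o Oo; apply: cmin; rewrite inE.
split; first exact: subset_closure.
move=> /nbhs_ballP [e /= ep sub].
set s := e / (`|g| + 1).
have gp : 0 <= `|g| by [].
have sp : 0 < s by rewrite /s divr_gt0 // ltr_pwDr.
have hb : ball c e (c - s *: g).
  rewrite mx_norm_ball /ball_ /= opprB addrC subrK normrZ gtr0_norm //.
  by rewrite /s mulrAC ltr_pdivrMr ?ltr_pwDr // ltr_pM2l // ltrDl ltr01.
have := cmin _ (mem_set (sub _ hb)).
rewrite dotBr dotZr => h0.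
have : s * dot g g <= 0 by lra.
rewrite pmulr_rle0 // => h.
have gg : dot g g = 0 by apply/eqP; rewrite eq_le h dot_ge0.
by move: gn0; rewrite (dot_eq0 gg) eqxx.
Qed.

Lemma bd_min' {n} (Om : set 'cV[R]_n) (g : 'cV[R]_n) :
  compact Om -> Om !=set0 -> (0 < n)%N ->
  exists w0, boundary Om w0 /\ forall o, Om o -> dot g w0 <= dot g o.
Proof.
move=> cOm nOm hn.
have [gn0|g0] := boolP (g != 0); first exact: bd_min.
move/negPn/eqP: g0 => ->.
have dn0 : delta_mx (Ordinal hn) 0 != 0 :> 'cV[R]_n.
  apply/negP => /eqP /matrixP /(_ (Ordinal hn) 0).
  by rewrite !mxE !eqxx /= => /eqP; rewrite oner_eq0.
have [w0 [hb _]] := bd_min _ _ cOm nOm dn0.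
by exists w0; split => // o _; rewrite !dot0l.
Qed.

End Geo.


Section Core.
Context {R : realType}.
Variables (nx p r q : nat) (ths : 'cV[R]_p)
  (Pi_w : 'M[R]_(q, nx)) (pi_w : 'cV[R]_q) (D : nat -> 'M[R]_(nx, p))
  (tau beta : R) (Nu : nat) (Om : set 'cV[R]_nx) (rho : R)
  (M : 'M[R]_(r, p)) (mu0 : 'cV[R]_r).
Hypotheses (htau : 0 < tau) (hbeta : 0 < beta) (hNu : (0 < Nu)%N)
  (hDnorm : forall t, mxnorm2 (D t) <= tau)
  (hPE : forall t, loewner_le (beta%:M) (\sum_(t <= j < t + Nu) (D j)^T *m D j))
  (hrho : 0 < rho)
  (hOmW : Om `<=` polyset Pi_w pi_w)
  (hWOm : polyset Pi_w pi_w `<=` minkowski_ball Om rho)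
  (hM : forall i : 'I_r, norm2 (row i M)^T = 1)
  (hMb : forall mu : 'cV[R]_r, bounded_set2 (polyset M mu))
  (hmu0 : polyset M mu0 ths).

Lemma ler_via (b a c : R) : a <= b -> b <= c -> a <= c.
Proof. exact: le_trans. Qed.

Definition Gm k := \sum_(k * Nu <= j < k * Nu + Nu) (D j)^T *m D j.
Definition zv i k := invmx (Gm k) *m (row i M)^T.
Definition hv i t := D t *m zv i (t %/ Nu).

Lemma zv_norm i k : norm2 (zv i k) <= beta^-1.
Proof.
apply: le_trans (loewner_inv_bound _ _ _ hbeta (hPE (k * Nu))) _.
by rewrite hM mul1r.
Qed.

Lemma Dz_norm t i k : norm2 (D t *m zv i k) <= tau / beta.
Proof.
apply: le_trans (mx_bound _ _) _.
apply: (ler_via (tau * norm2 (zv i k))).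
  by apply: ler_wpM2r => //; exact: norm2_ge0.
by apply: ler_wpM2l; [exact: ltW | exact: zv_norm].
Qed.

Lemma key_identity i k (dl : 'cV[R]_p) :
  dot (row i M)^T dl = \sum_(k * Nu <= t < k * Nu + Nu) dot (D t *m zv i k) (D t *m dl).
Proof.
have hU := loewner_unit _ _ hbeta (hPE (k * Nu)).
have -> : (row i M)^T = Gm k *m zv i k by rewrite /zv mulKVmx.
rewrite dotC /Gm mulmx_suml dot_sumr; apply: eq_bigr => t _.
by rewrite -mulmxA dot_mulmx trmxK dotC.
Qed.

Lemma dot_dev_bound {n} (h w w0 : 'cV[R]_n) e :
  (forall l, `|w l 0 - w0 l 0| < e) -> dot h w <= dot h w0 + n%:R * e * norm2 h.
Proof.
move=> hl; rewrite -lerBlDl -dotBr /dot.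
apply: (ler_via (\sum_(l < n) (e * norm2 h))); last first.
  by rewrite sumr_const card_ord -mulrA mulr_natl.
apply: ler_sum => l _; rewrite mxE.
apply: le_trans (ler_norm _) _; rewrite normrM mulrC.
apply: ler_pM => //; first by rewrite mxE ltW.
exact: coord_le_norm2.
Qed.

Lemma mink_bound {n} (Om' : set 'cV[R]_n) (h w0 u : 'cV[R]_n) :
  (forall o, Om' o -> dot h w0 <= dot h o) -> minkowski_ball Om' rho u ->
  dot h w0 - rho * norm2 h <= dot h u.
Proof.
move=> hw [oo [b [Oo [nb ->]]]].
rewrite dotDr dotZr; apply: lerD; first exact: hw.
have hb : - norm2 h <= dot h b.
  rewrite lerNl -dotNr; apply: (ler_via (norm2 h * norm2 (- b))); first exact: CS.
  rewrite -scaleN1r norm2Z normrN normr1 mul1r -[X in _ <= X]mulr1.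
  by apply: ler_wpM2l => //; exact: norm2_ge0.
by rewrite -mulrN ler_pM2l.
Qed.

Variable wt : nat -> 'cV[R]_nx.
Hypothesis hwt : forall t, Om (wt t).
Variable w0 : 'I_r -> nat -> 'cV[R]_nx.
Hypothesis hw0 : forall i t o, Om o -> dot (hv i t) (w0 i t) <= dot (hv i t) o.

Let Dlt := fun j => Delta Pi_w pi_w D ths wt j.
Let muk k := mu_upd M mu0 Nu Dlt k.

Lemma Delta_ths j : Dlt j ths.
Proof.
rewrite /Dlt /Delta /= subrr mulmx0 add0r.
exact: hOmW (hwt _).
Qed.

Lemma bounded_row i mu (S : set 'cV[R]_p) :
  has_ubound [set (M *m th) i 0 | th in polyset M mu `&` S].
Proof.
have [K hK] := hMb mu.
exists K => _ [th [hth _] <-].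
rewrite mulmx_entry_dot; apply: le_trans (CS _ _) _.
by rewrite hM mul1r; exact: hK.
Qed.

Lemma ths_in k : polyset M (muk k) ths.
Proof.
elim: k => [|k IH] //= i j; rewrite (ord1 j) [X in _ <= X]mxE.
apply: ub_le_sup; first exact: bounded_row.
exists ths => //; split => // j' _; exact: Delta_ths.
Qed.

Lemma div_window k t : (k * Nu <= t < k * Nu + Nu)%N -> (t %/ Nu)%N = k.
Proof.
move=> /andP [h1 h2].
have -> : t = (k * Nu + (t - k * Nu))%N by rewrite subnKC.
rewrite divnMDl // divn_small ?addn0 //.
by rewrite ltn_subLR.
Qed.

Lemma mu_bound i k e : 0 < e ->
  (forall t, (k * Nu <= t < k * Nu + Nu)%N ->
     forall l, `|wt t l 0 - w0 i t l 0| < e) ->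
  muk k.+1 i 0 <= (M *m ths) i 0 + Nu%:R * (tau / beta * (rho + nx%:R * e)).
Proof.
move=> ep hwin; rewrite /muk /= mxE.
apply: ge_sup.
  exists ((M *m ths) i 0), ths => //; split; first exact: ths_in.
  move=> j' _; exact: Delta_ths.
move=> _ [th [hth hw] <-].
rewrite !mulmx_entry_dot.
suff : - dot (row i M)^T (ths - th) <= Nu%:R * (tau / beta * (rho + nx%:R * e)).
  by rewrite dotBr; lra.
rewrite (key_identity i k) -sumrN.
apply: (ler_via (\sum_(k * Nu <= t < k * Nu + Nu) (tau / beta * (rho + nx%:R * e))));
  last by rewrite sumr_const_nat addKn [X in _ <= X]mulr_natl.
rewrite big_nat [X in _ <= X]big_nat; apply: ler_sum => t ht.
have hk : (t %/ Nu)%N = k by exact: div_window.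
set h := D t *m zv i k.
have hhv : hv i t = h by rewrite /hv hk.
set u := D t *m (ths - th) + wt t.
have hu : polyset Pi_w pi_w u.
  have := hw t.+1; rewrite /Dlt /Delta /=; apply.
  by move: ht => /andP [h1 h2]; rewrite mulSn; apply/andP; split; rewrite ?ltnS // addnC.
have hmin : forall o, Om o -> dot h (w0 i t) <= dot h o by rewrite -hhv; exact: hw0.
have b1 := mink_bound _ _ _ _ hmin (hWOm _ hu).
have b2 := dot_dev_bound h _ _ _ (hwin t ht).
have hn := Dz_norm t i k; rewrite -/h in hn.
have -> : D t *m (ths - th) = u - wt t by rewrite /u addrK.
rewrite dotBr.
have hn0 := norm2_ge0 h.
have hnx : 0 <= nx%:R :> R by [].
have : norm2 h * (rho + nx%:R * e) <= tau / beta * (rho + nx%:R * e).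
  by apply: ler_wpM2r => //; apply: addr_ge0; [exact: ltW| apply: mulr_ge0 => //; exact: ltW].
nra.
Qed.

Lemma final_bound th :
  (forall t, Theta_seq M mu0 Nu Dlt t th) ->
  (forall i n, exists k, forall t, (k * Nu <= t < k * Nu + Nu)%N ->
      forall l, `|wt t l 0 - w0 i t l 0| < (n.+1%:R)^-1) ->
  mxle (M *m (th - ths)) (const_mx (rho * Nu%:R * tau / beta)).
Proof.
move=> hth hev i j; rewrite (ord1 j) [X in _ <= X]mxE mulmx_entry_dot dotBr.
rewrite -!mulmx_entry_dot.
apply/ler_addgt0Pr => eps epsp.
set K := Nu%:R * (tau / beta) * nx%:R.
have hK : 0 <= K.
  have h := divr_gt0 htau hbeta.
  by rewrite /K; apply: mulr_ge0 => //; apply: mulr_ge0 => //; exact: ltW.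
have hKe : 0 <= K / eps by rewrite divr_ge0 // ltW.
set n := Num.bound (K / eps).
have hn := archi_boundP hKe; rewrite -/n in hn.
have hKn : K < n%:R * eps by rewrite -ltr_pdivrMr.
have [k hk] := hev i n.
have en : 0 < (n.+1%:R : R)^-1 by rewrite invr_gt0 ltr0Sn.
have hb := mu_bound i k _ en hk.
have ht := hth (k.+1 * Nu)%N; rewrite /Theta_seq mulnK // in ht.
have ht' := ht i 0.
have hn1 : (n.+1%:R : R) * (n.+1%:R)^-1 = 1 by rewrite mulfV // pnatr_eq0.
have hn2 : (n.+1%:R : R) = n%:R + 1 by rewrite -natr1.
set e := (n.+1%:R : R)^-1 in en hb hn1.
have hKe2 : K * e <= eps.
  rewrite hn2 in hn1.
  have h0 : 0 <= n%:R :> R by [].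
  nra.
have : Nu%:R * (tau / beta * (rho + nx%:R * e)) = rho * Nu%:R * tau / beta + K * e.
  by rewrite /K; field; rewrite gt_eqF.
move: ht' hb; rewrite /muk.
lra.
Qed.

End Core.


Section Prob.
Context {d : measure_display} {T : measurableType d} {R : realType}
  (P : probability T R).
Variables (n : nat) (w : nat -> T -> 'cV[R]_n).
Hypothesis hindep : indep_seq P w.
Variable A : nat -> set T.
Hypothesis hA : forall t, rvec_sigma (w t) (A t).
Hypothesis hAm : forall t, measurable (A t).
Variable Nu : nat.

Definition pr (X : set T) : R := fine (P X).

Lemma prE X : measurable X -> P X = (pr X)%:E.
Proof. by move=> mX; rewrite /pr fineK // fin_num_measure. Qed.

Lemma pr_ge0 X : 0 <= pr X.
Proof. by rewrite /pr fine_ge0 // measure_ge0. Qed.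

Lemma pr_le1 X : measurable X -> pr X <= 1.
Proof. by move=> mX; rewrite -lee_fin -prE // probability_le1. Qed.

Definition HF (F : seq nat) := \big[setI/setT]_(t <- F) A t.

Lemma HF_meas F : measurable (HF F).
Proof. by apply: bigsetI_measurable => t _; exact: hAm. Qed.

Lemma prHF F : uniq F -> pr (HF F) = \prod_(t <- F) pr (A t).
Proof.
move=> uF; have := hindep F A uF (fun t _ => hA t).
move=> h; rewrite /pr /HF h.
rewrite (eq_bigr (fun t => (pr (A t))%:E)); last first.
  by move=> t _; rewrite /pr fineK // fin_num_measure.
by rewrite prodEFin.
Qed.

Definition E k := HF (iota (k * Nu) Nu).

Fixpoint X m := match m with 0 => setT | m'.+1 => X m' `&` ~` E m' end.

Lemma X_meas m : measurable (X m).
Proof.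
elim: m => [|m IH] /=; first exact: measurableT.
by apply: measurableI => //; apply: measurableC; exact: HF_meas.
Qed.

Lemma claim m F : uniq F -> (forall t, t \in F -> (m * Nu <= t)%N) ->
  pr (X m `&` HF F) = (\prod_(k < m) (1 - pr (E k))) * pr (HF F).
Proof.
elim: m F => [|m IH] F uF hF.
  by rewrite /= setTI big_ord0 mul1r.
set s := iota (m * Nu) Nu.
have us : uniq (s ++ F).
  rewrite cat_uniq iota_uniq uF andbT /=; apply/hasPn => t tF.
  rewrite mem_iota negb_and -leqNgt; apply/orP; right.
  by have := hF t tF; rewrite mulSn addnC.
have hsF : forall t, t \in s ++ F -> (m * Nu <= t)%N.
  move=> t; rewrite mem_cat mem_iota => /orP [/andP [] //|tF].
  by apply: leq_trans (hF t tF); rewrite leq_mul2r leqnSn orbT.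
have hF' : forall t, t \in F -> (m * Nu <= t)%N.
  by move=> t tF; apply: leq_trans (hF t tF); rewrite leq_mul2r leqnSn orbT.
have mY : measurable (X m `&` HF F) by apply: measurableI; [exact: X_meas|exact: HF_meas].
have mE : measurable (E m) by exact: HF_meas.
have := (measureDI P mY mE : P (X m `&` HF F) = P ((X m `&` HF F) `\` E m) + P (X m `&` HF F `&` E m)).
have -> : (X m `&` HF F) `\` E m = X m.+1 `&` HF F.
  by rewrite /= setDE setIAC.
have -> : X m `&` HF F `&` E m = X m `&` HF (s ++ F).
  by rewrite /HF big_cat /= -setIA (setIC (HF F)).
rewrite !prE //; try by apply: measurableI; [exact: X_meas|exact: HF_meas].
rewrite -EFinD => -[] h.
have hb : pr (HF (s ++ F)) = pr (E m) * pr (HF F).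
  by rewrite (prHF _ us) big_cat /= -(prHF _ (iota_uniq _ _)) -(prHF _ uF).
have -> : pr (X m.+1 `&` HF F) =
  pr (X m `&` HF F) - pr (X m `&` HF (s ++ F)) by rewrite h; ring.
rewrite (IH F) // (IH (s ++ F)) // hb big_ord_recr /=.
ring.
Qed.

Lemma pr_le U V : measurable U -> measurable V -> U `<=` V -> pr U <= pr V.
Proof.
move=> mA mB AB; rewrite -lee_fin -!prE //.
exact: (le_measure P (mem_set mA) (mem_set mB) AB : (P U <= P V)%E).
Qed.

Lemma prX m : pr (X m) = \prod_(k < m) (1 - pr (E k)).
Proof.
have := claim m [::] isT (fun t (h : t \in [::]) => ltac:(by [])).
rewrite /HF big_nil setIT => ->.
by rewrite /pr probability_setT /= mulr1.
Qed.

Lemma prod_bound m p0 : (forall k, p0 <= pr (E k)) ->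
  \prod_(k < m) (1 - pr (E k)) <= (1 - p0) ^+ m.
Proof.
move=> hp; elim: m => [|m IH]; first by rewrite big_ord0 expr0.
rewrite big_ord_recr exprSr /=; apply: ler_pM => //.
- by apply: prodr_ge0 => k _; rewrite subr_ge0 pr_le1 //; exact: HF_meas.
- by rewrite subr_ge0 pr_le1 //; exact: HF_meas.
- by rewrite lerB.
Qed.

Lemma bernoulli_bd (p0 : R) m : 0 <= p0 -> 1 + m%:R * p0 <= (1 + p0) ^+ m.
Proof.
move=> hp; elim: m => [|m IH]; first by rewrite mul0r addr0 expr0.
rewrite exprSr -natr1.
have h1 : 0 <= m%:R * p0 by rewrite mulr_ge0.
nra.
Qed.

Lemma geom_small (p0 a : R) : 0 < p0 <= 1 -> 0 < a -> exists m, (1 - p0) ^+ m < a.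
Proof.
move=> /andP [hp0 hp1] ha.
have hx : 0 <= (a * p0)^-1 by rewrite invr_ge0 mulr_ge0 // ltW.
exists (Num.bound ((a * p0)^-1)).
set m := Num.bound _.
have hm := archi_boundP hx; rewrite -/m in hm.
have hb := bernoulli_bd p0 m (ltW hp0).
have h1 : (1 - p0) ^+ m * (1 + p0) ^+ m <= 1.
  rewrite -exprMn; apply: exprn_ile1; nra.
have h2 : 0 <= (1 - p0) ^+ m by apply: exprn_ge0; lra.
have h3 : (1 - p0) ^+ m * (1 + m%:R * p0) <= 1.
  apply: le_trans h1; exact: ler_wpM2l.
have hap : 0 < a * p0 by rewrite mulr_gt0.
have h4 : 1 < m%:R * (a * p0).
  by rewrite -(ltr_pM2r hap) mulVf ?gt_eqF // in hm.
have h5 : 0 <= m%:R by [].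
set x := (1 - p0) ^+ m in h2 h3 *.
set y := m%:R in h3 h4 h5.
nra.
Qed.

Lemma X_sub m : \bigcap_k ~` E k `<=` X m.
Proof.
elim: m => [|m IH] x hx //=; split; first exact: IH.
exact: hx.
Qed.

Lemma bad_negligible (p0 : R) : 0 < p0 -> (forall k, p0 <= pr (E k)) ->
  P.-negligible (\bigcap_k ~` E k).
Proof.
move=> hp hk'.
have hp1 : p0 <= 1 by apply: le_trans (hk' 0%N) _; apply: pr_le1; exact: HF_meas.
have mB : measurable (\bigcap_k ~` E k).
  by apply: bigcapT_measurable => k; apply: measurableC; exact: HF_meas.
suff h0 : P (\bigcap_k ~` E k) = 0%E by apply/negligibleP => //; exact: h0.
rewrite prE //; congr EFin.
apply/eqP; rewrite eq_le pr_ge0 andbT; rewrite leNgt; apply/negP => hpos.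
have [m hm] := geom_small p0 (pr (\bigcap_k ~` E k)) ltac:(by rewrite hp hp1) hpos.
have : pr (\bigcap_k ~` E k) <= (1 - p0) ^+ m.
  apply: le_trans (pr_le _ _ mB (X_meas m) (X_sub m)) _.
  by rewrite prX; exact: prod_bound.
by rewrite leNgt hm.
Qed.

End Prob.


Section Events.
Context {d : measure_display} {T : measurableType d} {R : realType}.

Lemma in_bigI (I : eqType) (s : seq I) (F : I -> set T) x :
  (\big[setI/setT]_(i <- s) F i) x <-> forall i, i \in s -> F i x.
Proof.
elim: s => [|a s IH]; first by rewrite big_nil; split.
rewrite big_cons; split.
  move=> [ha hs] i; rewrite in_cons => /orP [/eqP -> //|iS].
  exact: (proj1 IH hs).
move=> h; split; first by apply: h; rewrite mem_head.
by apply: (proj2 IH) => i iS; apply: h; rewrite in_cons iS orbT.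
Qed.

Lemma sigI (G : set (set T)) U V : <<s G >> U -> <<s G >> V -> <<s G >> (U `&` V).
Proof.
move=> hU hV.
have -> : U `&` V = setT `\` \bigcup_k (fun k => if k is 0%N then setT `\` U else setT `\` V) k.
  apply/seteqP; split => x.
    by move=> [ux vx]; split => // -[[|k] _ /= [_ h]]; apply: h.
  move=> [_ hx]; split.
    by apply: contrapT => ux; apply: hx; exists 0%N.
  by apply: contrapT => vx; apply: hx; exists 1%N.
apply: (@sigma_algebraCD T setT G); apply: (@sigma_algebra_bigcup T setT G) => k.
by case: k => [|k]; apply: (@sigma_algebraCD T setT G).
Qed.

Lemma sigT (G : set (set T)) : <<s G >> setT.
Proof. by have := @sigma_algebraCD T setT G set0 (@sigma_algebra0 T setT G); rewrite setD0. Qed.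

Lemma sig_bigI (G : set (set T)) (I : Type) (s : seq I) (F : I -> set T) :
  (forall i, <<s G >> (F i)) -> <<s G >> (\big[setI/setT]_(i <- s) F i).
Proof.
move=> h; elim: s => [|a s IH]; first by rewrite big_nil; exact: sigT.
by rewrite big_cons; apply: sigI.
Qed.

Variables (nx : nat) (wt : T -> 'cV[R]_nx).
Hypothesis hm : forall (l : 'I_nx), measurable_fun setT (fun x => wt x l 0).

Definition Box (w0 : 'cV[R]_nx) (e : R) :=
  [set x | forall l : 'I_nx, `|wt x l 0 - w0 l 0| < e].

Lemma Box_bigI w0 e : Box w0 e =
  \big[setI/setT]_(l <- enum 'I_nx)
     ((fun x => wt x l 0) @^-1` `](w0 l 0 - e), (w0 l 0 + e)[%classic).
Proof.
apply/seteqP; split => x.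
  move=> hx; apply/in_bigI => l _ /=; rewrite in_itv /=.
  by rewrite -ltr_distl.
move=> /in_bigI hx l; have := hx l (mem_enum _ _).
by rewrite /= in_itv /= -ltr_distl.
Qed.

Lemma Box_sigma w0 e : rvec_sigma wt (Box w0 e).
Proof.
rewrite Box_bigI; apply: sig_bigI => l; apply: sub_sigma_algebra.
by exists l, `](w0 l 0 - e), (w0 l 0 + e)[%classic; split => //; exact: measurable_itv.
Qed.

Lemma Box_meas w0 e : measurable (Box w0 e).
Proof.
rewrite Box_bigI; apply: bigsetI_measurable => l _.
rewrite -[X in measurable X]setTI; apply: hm => //; exact: measurable_itv.
Qed.

Lemma Ball_meas w0 e : 0 < e -> measurable [set x | norm2 (wt x - w0) < e].
Proof.
move=> ep.
have mS : measurable_fun setT (fun x => \sum_(l < nx) (wt x l 0 - w0 l 0) ^+ 2).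
  apply: measurable_sum => l; apply: measurable_funX.
  by apply: measurable_funB => //; exact: measurable_cst.
have -> : [set x | norm2 (wt x - w0) < e] =
   (fun x => \sum_(l < nx) (wt x l 0 - w0 l 0) ^+ 2) @^-1` `]-oo, (e ^+ 2)[%classic.
  apply/seteqP; split => x /=; rewrite in_itv /= /norm2.
    have -> : \sum_(l < nx) (wt x - w0) l 0 ^+ 2 = \sum_(l < nx) (wt x l 0 - w0 l 0) ^+ 2.
      by apply: eq_bigr => l _; rewrite !mxE.
    move=> h; rewrite -(ltr_sqrt _ (exprn_gt0 2 ep)) sqrtr_sqr gtr0_norm //.
  have -> : \sum_(l < nx) (wt x - w0) l 0 ^+ 2 = \sum_(l < nx) (wt x l 0 - w0 l 0) ^+ 2.
    by apply: eq_bigr => l _; rewrite !mxE.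
  by rewrite -(ltr_sqrt _ (exprn_gt0 2 ep)) sqrtr_sqr gtr0_norm.
rewrite -[X in measurable X]setTI; apply: mS => //; exact: measurable_itv.
Qed.

Lemma Ball_sub_Box w0 e : [set x | norm2 (wt x - w0) < e] `<=` Box w0 e.
Proof.
move=> x /= h l; apply: le_lt_trans h.
by have := coord_le_norm2 (wt x - w0) l; rewrite !mxE.
Qed.

End Events.


Lemma bigU_negl {d : measure_display} {T : measurableType d} {R : realType}
  (P : probability T R) (I : Type) (s : seq I) (F : I -> set T) :
  (forall i, P.-negligible (F i)) -> P.-negligible (\big[setU/set0]_(i <- s) F i).
Proof.
move=> h; elim: s => [|a s IH]; first by rewrite big_nil; exact: negligible_set0.
by rewrite big_cons; apply: negligibleU.
Qed.

Lemma in_bigU {T : Type} (I : eqType) (s : seq I) (F : I -> set T) i x :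
  i \in s -> F i x -> (\big[setU/set0]_(j <- s) F j) x.
Proof.
elim: s => [//|a s IH]; rewrite in_cons big_cons => /orP [/eqP <- h|hs h].
  by left.
by right; apply: IH.
Qed.

Lemma prod_const_iota {R : realType} (c : R) a m : \prod_(t <- iota a m) c = c ^+ m.
Proof.
elim: m a => [|m IH] a; first by rewrite big_nil expr0.
by rewrite /= big_cons IH exprS.
Qed.

Theorem corollary5
  (R : realType) (d : measure_display) (T : measurableType d)
  (P : probability T R)
  (nx p r q : nat) (hnx : (0 < nx)%N) (hp : (0 < p)%N)
  (ths : 'cV[R]_p)
  (Pi_w : 'M[R]_(q, nx)) (pi_w : 'cV[R]_q)
  (hpi : forall i, 0 < pi_w i 0)
  (hWc : compact (polyset Pi_w pi_w))
  (w : nat -> T -> 'cV[R]_nx)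
  (hwmeas : forall t (i : 'I_nx), measurable_fun setT (fun x => w t x i 0))
  (hindep : indep_seq P w)
  (D : nat -> 'M[R]_(nx, p))
  (tau beta : R) (Nu : nat)
  (htau : 0 < tau) (hbeta : 0 < beta)
  (hNu : ((p + nx - 1) %/ nx <= Nu)%N)
  (hDnorm : forall t, mxnorm2 (D t) <= tau)
  (hPE : forall t, loewner_le (beta%:M)
          (\sum_(t <= j < t + Nu) (D j)^T *m D j))
  (Om : set 'cV[R]_nx) (rho : R) (hOmc : compact Om) (hrho : 0 < rho)
  (hOmW : Om `<=` polyset Pi_w pi_w)
  (hWOm : polyset Pi_w pi_w `<=` minkowski_ball Om rho)
  (hwOm : forall t x, Om (w t x))
  (pw : R -> R) (hpw : forall e : R, 0 < e -> 0 < pw e <= 1)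
  (hpw_bd : forall (w0 : 'cV[R]_nx) (e : R) (t : nat), boundary Om w0 -> 0 < e ->
      ((pw e)%:E <= P [set x | (norm2 (w t x - w0) < e)%R])%E)
  (M : 'M[R]_(r, p))
  (hM : forall i : 'I_r, norm2 (row i M)^T = 1)
  (hMb : forall mu : 'cV[R]_r, bounded_set2 (polyset M mu))
  (mu0 : 'cV[R]_r) (hmu0 : polyset M mu0 ths) :
  {ae P, forall x,
     \bigcap_(t in [set: nat])
        Theta_seq M mu0 Nu (fun j => Delta Pi_w pi_w D ths (fun s => w s x) j) t
     `<=` [set th | mxle (M *m (th - ths)) (const_mx (rho * Nu%:R * tau / beta))]}.

Proof.
have hNu0 : (0 < Nu)%N.
  apply: leq_trans hNu; rewrite divn_gt0 //; lia.
set Q := fun x => \bigcap_(t in [set: nat])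
        Theta_seq M mu0 Nu (fun j => Delta Pi_w pi_w D ths (fun s => w s x) j) t
     `<=` [set th | mxle (M *m (th - ths)) (const_mx (rho * Nu%:R * tau / beta))].
change (P.-negligible (~` [set x | Q x])).
have [[x0 _]|hT] := pselect (exists x : T, True); last first.
  apply: negligibleS (negligible_set0 P) => x _; apply: hT; by exists x.
have Omn : Om !=set0 by exists (w 0%N x0).
pose hvv := hv nx p r D Nu M.
have hex : forall it : 'I_r * nat, exists w0, boundary Om w0 /\
    forall o, Om o -> dot (hvv it.1 it.2) w0 <= dot (hvv it.1 it.2) o.
  by move=> it; apply: bd_min'.
have [f hf] := choice hex.
pose w0 := fun i t => f (i, t).
have hw0 : forall i t o, Om o -> dot (hvv i t) (w0 i t) <= dot (hvv i t) o.
  by move=> i t; exact: (hf (i, t)).2.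
have hbd : forall i t, boundary Om (w0 i t) by move=> i t; exact: (hf (i, t)).1.
pose ee := fun n : nat => (n.+1%:R : R)^-1.
have een : forall n, 0 < ee n by move=> n; rewrite invr_gt0 ltr0Sn.
pose A := fun (i : 'I_r) n t => Box nx (w t) (w0 i t) (ee n).
pose Bad := fun i n => \bigcap_k ~` E (A i n) Nu k.
have hA1 : forall i n t, rvec_sigma (w t) (A i n t) by move=> *; exact: Box_sigma.
have hA2 : forall i n t, measurable (A i n t) by move=> i n t; exact: Box_meas.
have negBad : forall i n, P.-negligible (Bad i n).
  move=> i n.
  have := hpw (ee n) (een n); move/andP => [hp1 hp2].
  apply: (bad_negligible P nx w hindep (A i n) (hA1 i n) (hA2 i n) Nu
     (pw (ee n) ^+ Nu) (exprn_gt0 _ hp1)) => k.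
  rewrite /E (prHF P nx w hindep (A i n) (hA1 i n) (hA2 i n)) ?iota_uniq //.
  rewrite -(prod_const_iota (pw (ee n)) (k * Nu)).
  apply: ler_prod => t _; rewrite (ltW hp1) /=.
  have mB := Ball_meas nx (w t) (hwmeas t) (w0 i t) (ee n) (een n).
  apply: le_trans (pr_le P _ _ mB (hA2 i n t) (Ball_sub_Box _ _ _ _)).
  have hb := hpw_bd (w0 i t) (ee n) t (hbd i t) (een n).
  rewrite /pr; move: hb; set B := P _.
  have hfin : B \is a fin_num by rewrite /B fin_num_measure.
  by rewrite -(fineK hfin) lee_fin.
have hN : P.-negligible (\bigcup_n \big[setU/set0]_(i <- enum 'I_r) Bad i n).
  by apply: negligible_bigcup => n; apply: bigU_negl => i; exact: negBad.
apply: negligibleS hN.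
move=> x hx; apply: contrapT => hnot; apply: hx => th hth.
apply: (final_bound nx p r q ths Pi_w pi_w D tau beta Nu Om rho M mu0 htau hbeta
  hNu0 hDnorm hPE hrho hOmW hWOm hM hMb hmu0 (fun s => w s x) (fun t => hwOm t x)
  w0 hw0 th).
  by move=> t; exact: hth t I.
move=> i n; apply: contrapT => hk; apply: hnot; exists n => //.
apply: (in_bigU _ _ _ i); first exact: mem_enum.
move=> k _ hEk; apply: hk; exists k => t ht l.
have := (proj1 (in_bigI _ _ _ x) hEk) t; rewrite mem_iota; apply.
by [].
Qed.
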